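(* Let $K$ be a field, $X$ a finite connected poset, $m$ a positive integer, and $I\subseteq J_m$ an ideal of $I(X,K)$ such that $\dim_K\big(I/(I\cap J_{m+1})\big)=1$. Then there exists a unique $e_{xy}\in J_m\setminus J_{m+1}$ such that every $f\in I\setminus J_{m+1}$ is of the form $f=f(x,y)e_{xy}+j_{xy}$ with $j_{xy}\in J_{m+1}$.
   Context: $I(X,K)$ is the incidence algebra: functions $f:X\times X\to K$ with $f(x,y)=0$ unless $x\le y$, product $(fg)(x,y)=\sum_{x\le t\le y}f(x,t)g(t,y)$; $e_{xy}$ ($x\le y$) is the function equal to $1$ at $(x,y)$ and $0$ elsewhere. $[f,g]=fg-gf$; $J_1=\mathrm{span}_K\{[f,g]: f,g\in I(X,K)\}$ and $J_k=\mathrm{span}_K\{[f,g]: f\in J_1, g\in J_{k-1}\}$ for $k\ge2$ (one has $J_k=\mathrm{span}_K\{e_{xy}: l(\lfloor x,y\rfloor)\ge k\}$, where $l(\lfloor x,y\rfloor)$ is the maximal length of a chain in $\{z:x\le z\le y\}$). Connected means any two elements are joined by a sequence in which consecutive elements are in a covering relation. *)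

(* Defs.v *)
From HB Require Import structures.
From mathcomp Require Import all_boot all_order all_algebra.
Set Implicit Arguments. Unset Strict Implicit. Unset Printing Implicit Defensive.
Import Order.TTheory GRing.Theory.
Local Open Scope ring_scope.

Section Incidence.
Variables (K : fieldType) (d : Order.disp_t) (X : finPOrderType d).

Definition ifun := X -> X -> K.

Definition incidence (f : ifun) : Prop :=
  forall x y, ~~ (x <= y)%O -> f x y = 0.

Definition imul (f g : ifun) : ifun :=
  fun x y => \sum_(t | (x <= t)%O && (t <= y)%O) f x t * g t y.

Definition icomm (f g : ifun) : ifun :=
  fun x y => imul f g x y - imul g f x y.

Definition eunit (x y : X) : ifun :=
  fun a b => if (a == x) && (b == y) then 1 else 0.

Definition span (P : ifun -> Prop) (f : ifun) : Prop :=
  exists (n : nat) (c : 'I_n -> K) (g : 'I_n -> ifun),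
    (forall i, P (g i)) /\ forall x y, f x y = \sum_(i < n) c i * g i x y.

Definition J1 : ifun -> Prop :=
  span (fun h => exists f g, [/\ incidence f, incidence g &
                                 forall x y, h x y = icomm f g x y]).

(* J_0 := I(X,K) (convention), J_1 as above,
   J_k = span {[f,g] : f in J_1, g in J_(k-1)} for k >= 2 *)
Fixpoint J (k : nat) : ifun -> Prop :=
  match k with
  | 0 => incidence
  | 1 => J1
  | S k' => span (fun h => exists f g, [/\ J1 f, J k' g &
                                         forall x y, h x y = icomm f g x y])
  end.

Definition is_ideal (I : ifun -> Prop) : Prop :=
  [/\ (forall f, I f -> incidence f),
      I (fun _ _ => 0),
      (forall f g, I f -> I g -> I (fun x y => f x y + g x y)),
      (forall (c : K) f, I f -> I (fun x y => c * f x y)) &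
      (forall f g, incidence f -> I g -> I (imul f g) /\ I (imul g f))].

(* dim_K (I / (I ∩ L)) = 1, for subspaces I, L: the quotient has a basis
   consisting of the single class of some f0 in I \ L. *)
Definition quot_dim1 (I L : ifun -> Prop) : Prop :=
  exists f0, [/\ I f0, ~ L f0 &
    forall f, I f -> exists c : K, L (fun x y => f x y - c * f0 x y)].

Definition covers (x y : X) : bool :=
  (x < y)%O && [forall z : X, ~~ ((x < z)%O && (z < y)%O)].

Definition poset_connected : Prop :=
  forall x y : X, connect (fun a b => covers a b || covers b a) x y.

Definition good_unit (I : ifun -> Prop) (m : nat) (x y : X) : Prop :=
  [/\ (x <= y)%O, J m (eunit x y), ~ J m.+1 (eunit x y) &
      forall f, I f -> ~ J m.+1 f ->
        exists j, J m.+1 j /\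
          forall a b, f a b = f x y * eunit x y a b + j a b].

End Incidence.

(* Main.v *)
Require Import Defs.
From mathcomp Require Import all_boot all_order all_algebra.
Set Implicit Arguments. Unset Strict Implicit. Unset Printing Implicit Defensive.
Import Order.TTheory GRing.Theory.
Local Open Scope ring_scope.

Section Aux.
Variables (K : fieldType) (d : Order.disp_t) (X : finPOrderType d).

Fixpoint levb (k : nat) (x y : X) : bool :=
  match k with
  | 0 => (x <= y)%O
  | k'.+1 => [exists z, (x < z)%O && levb k' z y]
  end.

Lemma levb_le k x y : levb k x y -> (x <= y)%O.
Proof.
elim: k x => [//|k IH] x /= /existsP [z /andP [xz /IH zy]].
exact: le_trans (ltW xz) zy.
Qed.

Lemma levb_lower b x t y : (x <= t)%O -> levb b t y -> levb b x y.
Proof.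
case: b => [|b] /= xt; first exact: le_trans.
case/existsP=> z /andP [tz h]; apply/existsP; exists z.
by rewrite (le_lt_trans xt tz).
Qed.

Lemma levb_add a b x t y : levb a x t -> levb b t y -> levb (a + b) x y.
Proof.
elim: a x => [|a IH] x /=; first exact: levb_lower.
case/existsP=> z /andP [xz zt] ty; apply/existsP; exists z.
by rewrite xz (IH _ zt ty).
Qed.

Lemma levb1 x y : levb 1 x y = (x < y)%O.
Proof.
apply/existsP/idP => [[z /andP [xz zy]]|xy]; first exact: lt_le_trans xz zy.
by exists y; rewrite xy lexx.
Qed.

Definition Lk (k : nat) (f : ifun K X) : Prop :=
  forall a b, f a b != 0 -> levb k a b.

Lemma sum_neq0 (I : finType) (P : pred I) (F : I -> K) :
  \sum_(i | P i) F i != 0 -> exists i, P i /\ F i != 0.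
Proof.
case: (boolP [exists i, P i && (F i != 0)]) => [/existsP [i /andP [Pi Fi]]|H].
  by exists i.
rewrite big1 ?eqxx // => i Pi; apply/eqP; apply: contraNT H => Fi.
by apply/existsP; exists i; rewrite Pi.
Qed.

Lemma imul_L a b (f g : ifun K X) : Lk a f -> Lk b g -> Lk (a + b) (imul f g).
Proof.
move=> hf hg x y /sum_neq0 [t [_ Ht]].
have ft : f x t != 0 by apply: contraNneq Ht => ->; rewrite mul0r.
have gt : g t y != 0 by apply: contraNneq Ht => ->; rewrite mulr0.
exact: levb_add (hf _ _ ft) (hg _ _ gt).
Qed.

Lemma icomm_L a b (f g : ifun K X) : Lk a f -> Lk b g -> Lk (a + b) (icomm f g).
Proof.
move=> hf hg x y; rewrite /icomm.
case: (boolP (imul f g x y == 0)) => [/eqP ->|H _]; last exact: imul_L H.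
rewrite sub0r oppr_eq0 => H; rewrite addnC; exact: imul_L H.
Qed.

Lemma imul_diag (f g : ifun K X) x : imul f g x x = f x x * g x x.
Proof.
rewrite /imul (eq_bigl (pred1 x)) ?big_pred1_eq // => t /=.
by rewrite eq_sym eq_le.
Qed.

Lemma span_L k (P : ifun K X -> Prop) (f : ifun K X) : (forall g, P g -> Lk k g) -> Defs.span P f -> Lk k f.
Proof.
move=> hP [n [c [g [Pg Hf]]]] x y; rewrite Hf => /sum_neq0 [i [_ Hi]].
apply: (hP _ (Pg i)); apply: contraNneq Hi => ->; by rewrite mulr0.
Qed.

Lemma incidence_L (f : ifun K X) : incidence f <-> Lk 0 f.
Proof.
split=> [hf x y|hf x y]; first by apply: contraR => /hf ->.
by apply: contraNeq => /hf.
Qed.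

Lemma J1_L (f : ifun K X) : J1 f -> Lk 1 f.
Proof.
apply: span_L => g [f1 [g1 [hf hg Hg]]] x y; rewrite Hg.
have H := icomm_L (proj1 (incidence_L _) hf) (proj1 (incidence_L _) hg).
move=> Hn; have /= xy := H x y Hn; rewrite -[X in is_true X]/(levb 1 x y) levb1 lt_neqAle xy andbT.
apply: contraNneq Hn => ->; by rewrite /icomm !imul_diag mulrC subrr.
Qed.

Lemma J_L k (f : ifun K X) : J k f -> Lk k f.
Proof.
elim: k f => [|k IH] f; first by move/incidence_L.
case: k IH => [|k] IH; first exact: J1_L.
apply: span_L => g [f1 [g1 [hf hg Hg]]] x y; rewrite Hg.
exact: (icomm_L (J1_L hf) (IH _ hg)).
Qed.

Definition zf : ifun K X := fun _ _ => 0.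

Lemma span_all (P : ifun K X -> Prop) (f : ifun K X) : P zf -> (forall x y, f x y != 0 -> P (eunit K x y)) -> Defs.span P f.
Proof.
move=> P0 Pe.
pose g (p : X * X) : ifun K X := if f p.1 p.2 != 0 then eunit K p.1 p.2 else zf.
exists #|[pred p : X * X | true]|, (fun i => f (enum_val i).1 (enum_val i).2),
  (fun i => g (enum_val i)); split.
  by move=> i; rewrite /g; case: ifP => // /Pe.
move=> x y; rewrite -(big_enum_val (fun p : X * X => f p.1 p.2 * g p x y)) /=.
rewrite (bigD1 (x, y)) //= big1 ?addr0.
  rewrite /g /=; case: (f x y =P 0) => [->|_] /=; first by rewrite mul0r.
  by rewrite /eunit !eqxx mulr1.
move=> [a b] /= ne; rewrite /g /=; case: ifP => _; last by rewrite mulr0.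
rewrite /eunit; case: ifP; last by rewrite mulr0.
by case/andP => /eqP ax /eqP bx; move: ne; rewrite ax bx eqxx.
Qed.

Lemma span1 (P : ifun K X -> Prop) (g : ifun K X) : P g -> Defs.span P g.
Proof.
move=> Pg; exists 1%N, (fun _ => 1), (fun _ => g); split=> // x y.
by rewrite big_ord1 mul1r.
Qed.

Lemma span0 (P : ifun K X -> Prop) : Defs.span P zf.
Proof. by exists 0%N, (fun _ => 0), (fun _ => zf); split=> [[]//|x y]; rewrite big_ord0. Qed.

Lemma J_zf k : J k zf.
Proof. by case: k => [|[|k]] /=; [move=> ? ?|exact: span0|exact: span0]. Qed.

Lemma sum_if1 (P : pred X) (F : X -> K) a :
  \sum_(t | P t) (if t == a then F t else 0) = if P a then F a else 0.
Proof.
case: ifP => Pa.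
  rewrite (bigD1 a) //= eqxx big1 ?addr0 // => t /andP [_ /negbTE ->] //.
by rewrite big1 // => t Pt; case: eqP => // ta; move: Pa; rewrite -ta Pt.
Qed.

Lemma imul_eunit_l x z (g : ifun K X) a b :
  imul (eunit K x z) g a b = if (a == x) && ((a <= z)%O && (z <= b)%O) then g z b else 0.
Proof.
rewrite /imul /eunit; case: (a =P x) => [->|_] /=.
  rewrite -(sum_if1 (fun t => (x <= t)%O && (t <= b)%O) (fun t => g t b)).
  by apply: eq_bigr => t _; case: eqP => [->|_]; rewrite ?mul1r ?mul0r.
by rewrite big1 // => t _; rewrite mul0r.
Qed.

Lemma imul_eunit_r z y (f : ifun K X) a b :
  imul f (eunit K z y) a b = if (b == y) && ((a <= z)%O && (z <= b)%O) then f a z else 0.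
Proof.
rewrite /imul /eunit; case: (b =P y) => [->|_] /=.
  rewrite -(sum_if1 (fun t => (a <= t)%O && (t <= y)%O) (fun t => f a t)).
  by apply: eq_bigr => t _; rewrite ?eqxx ?andbT; case: eqP => [->|_]; rewrite ?mulr1 ?mulr0.
by rewrite big1 // => t _; rewrite andbF mulr0.
Qed.

Lemma comm_eunit (x z y : X) : (x < z)%O -> (z <= y)%O ->
  forall a b, eunit K x y a b = icomm (eunit K x z) (eunit K z y) a b.
Proof.
move=> xz zy a b; rewrite /icomm !imul_eunit_l.
have yx : (y == x) = false by apply: negbTE; rewrite eq_sym (lt_eqF (lt_le_trans xz zy)).
rewrite /eunit yx /= !if_same subr0 eqxx /=.
case: (a =P x) => [->|] /=; last by [].
rewrite (ltW xz) /=; case: (b =P y) => [->|]; first by rewrite zy.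
by case: ifP.
Qed.

Lemma eunit_inc (x y : X) : (x <= y)%O -> incidence (eunit K x y).
Proof.
move=> xy a b; rewrite /eunit; case: ifP => // /andP [/eqP -> /eqP ->].
by rewrite xy.
Qed.

Lemma eunit_J1 (x y : X) : (x < y)%O -> J1 (eunit K x y).
Proof.
move=> xy; apply: span1; exists (eunit K x y), (eunit K y y); split.
- exact: eunit_inc (ltW xy).
- exact: eunit_inc.
- exact: comm_eunit.
Qed.

Lemma eunit_J k (x y : X) : levb k x y -> J k (eunit K x y).
Proof.
elim: k x y => [|k IH] x y; first exact: eunit_inc.
case: k IH => [|k] IH; first by rewrite levb1; exact: eunit_J1.
move=> /= /existsP [z /andP [xz zy]]; apply: span1.
exists (eunit K x z), (eunit K z y); split.
- exact: eunit_J1.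
- exact: IH.
- exact: (comm_eunit xz (@levb_le k.+1 _ _ zy)).
Qed.

Lemma comm_zf : forall a b, zf a b = icomm zf zf a b.
Proof. by move=> a b; rewrite /icomm /imul /zf big1 ?subr0 // => *; rewrite mul0r. Qed.

Lemma L_J k (f : ifun K X) : Lk k f -> J k f.
Proof.
move=> hf; case: k hf => [|[|k]] hf.
- by apply/incidence_L.
- apply: span_all => [|x y /hf].
    exists zf, zf; split; [by move=> ? ? ?|by move=> ? ? ?|exact: comm_zf].
  move=> h; have xy : (x < y)%O by rewrite -levb1.
  exists (eunit K x y), (eunit K y y); split.
  + exact: eunit_inc (ltW xy).
  + exact: eunit_inc.
  + exact: comm_eunit xy (lexx y).
- apply: span_all => [|x y /hf /= /existsP [z /andP [xz zy]]].
    exists zf, zf; split; [exact: (J_zf 1)|exact: (J_zf k.+1)|exact: comm_zf].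
  exists (eunit K x z), (eunit K z y); split.
  + exact: eunit_J1.
  + exact: (@eunit_J k.+1).
  + exact: (comm_eunit xz (@levb_le k.+1 _ _ zy)).
Qed.

Lemma Lk_dec k (f : ifun K X) : (Lk k f) \/ exists a b, f a b != 0 /\ ~~ levb k a b.
Proof.
case: (boolP [exists a, exists b, (f a b != 0) && ~~ levb k a b]).
  by case/existsP=> a /existsP [b /andP [h1 h2]]; right; exists a, b.
move=> H; left=> a b fab; apply: contraNT H => hl.
by apply/existsP; exists a; apply/existsP; exists b; rewrite fab.
Qed.

End Aux.

Theorem proposition3p6 (K : fieldType) (d : Order.disp_t) (X : finPOrderType d)
    (m : nat) (I : ifun K X -> Prop) :
  poset_connected X -> (0 < m)%N -> is_ideal I ->
  (forall f, I f -> J m f) ->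
  quot_dim1 I (J m.+1) ->
  exists x y, good_unit I m x y /\
    (forall x' y', good_unit I m x' y' -> x' = x /\ y' = y).
Proof.
move=> _ _ [Iinc I0 Iadd Iscal Imul] IJ [f0 [If0 nJf0 Hq]].
have Lf0 := J_L (IJ _ If0).
case: (Lk_dec m.+1 f0) => [/L_J //|[x [y [fxy nl]]]].
have lm := Lf0 _ _ fxy.
have claim : forall a b, ~~ levb m.+1 a b -> (a, b) != (x, y) -> f0 a b = 0.
  move=> a b nab ne; apply/eqP; apply/negP => /negP fab.
  have ab : (a <= b)%O := levb_le (Lf0 _ _ fab).
  have Ih : I (imul f0 (eunit K b b)) by have [] := Imul _ _ ((@eunit_inc K _ _ b b (lexx b))) If0.
  have Ig : I (imul (eunit K a a) (imul f0 (eunit K b b))).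
    by have [] := Imul _ _ ((@eunit_inc K _ _ a a (lexx a))) Ih.
  have gE p q : imul (eunit K a a) (imul f0 (eunit K b b)) p q =
      if (p == a) && (q == b) then f0 a b else 0.
    rewrite imul_eunit_l imul_eunit_r; case: (p =P a) => [->|] //=.
    rewrite lexx /=; case: (q =P b) => [->|] /=; first by rewrite ab lexx.
    by case: ifP.
  have [c Hc] := Hq _ Ig; have Lc := J_L Hc.
  have cx : c * f0 x y = 0.
    apply/eqP; apply: contraNT nl => H; apply: Lc.
    rewrite gE; move: ne; rewrite /= xpair_eqE negb_and => ne.
    case: ifP => [/andP [/eqP xa /eqP yb]|_]; first by move: ne; rewrite xa yb !eqxx.
    by rewrite sub0r oppr_eq0.
  have c0 : c = 0 by apply/eqP; move: cx => /eqP; rewrite mulf_eq0 (negbTE fxy) orbF.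
  move: nab => /negP; apply; apply: Lc; by rewrite gE !eqxx c0 mul0r subr0.
have good : good_unit I m x y.
  split.
  - exact: levb_le lm.
  - apply: eunit_J; exact: lm.
  - move/J_L => H; move: nl => /negP; apply; apply: H; by rewrite /eunit !eqxx oner_eq0.
  - move=> f If _; exists (fun a b => f a b - f x y * eunit K x y a b); split; last first.
      by move=> a b; rewrite addrC subrK.
    apply: L_J => a b; have [c Hc] := Hq _ If; have Lc := J_L Hc.
    case: (boolP ((a, b) == (x, y))) => [/eqP [-> ->]|ne].
      by rewrite /eunit !eqxx mulr1 subrr eqxx.
    have -> : eunit K x y a b = 0.
      rewrite /eunit; case: ifP => // /andP [/eqP ax /eqP bx].
      by move: ne; rewrite ax bx eqxx.
    rewrite mulr0 subr0 => fab; apply: contraNT fab => nab.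
    have f0ab := claim _ _ nab ne.
    apply: contraNT nab => fab; apply: Lc; by rewrite f0ab mulr0 subr0.
exists x, y; split=> // x' y' [_ _ _ H].
have [j [Jj Hj]] := H _ If0 nJf0.
have jxy : j x y = 0 by apply/eqP; apply: contraNT nl => /(J_L Jj).
move: (Hj x y); rewrite jxy addr0 /eunit.
case: ifP => [/andP [/eqP -> /eqP ->] //|_]; rewrite mulr0 => /eqP.
by rewrite (negbTE fxy).
Qed.
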